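(* Let $X$ be a real Hilbert space, $r>0$, and let $Z\subset X$ be an $r$-prox-regular set. Then the following two conditions are equivalent: (a) there exists $\rho\in(0,r/5)$ such that for every $x\in Z$ there exists $\bar x\in Z$ with $|x-\bar x|^2+\rho^2<2r\rho$ and $B_{3\rho}(\bar x)\subset Z$; (b) there exist $s>0$ and $d>0$ such that for every $x\in Z$ there exists $x^*\in Z$ with $|x-x^*|\le d$ such that for all $\alpha\in(0,1]$ we have $x+\alpha(x^*-x)+\alpha B_s(0)\subset Z$.
   Context: $X$ is a real Hilbert space with scalar product $\langle\cdot,\cdot\rangle$ and norm $|\cdot|$; $\mathrm{dist}(x,Z)=\inf\{|x-z|:z\in Z\}$; $B_\delta(x)=\{y\in X:|y-x|\le\delta\}$ is the closed ball, and $x+\alpha B_s(0)=\{x+\alpha v: |v|\le s\}$. A closed connected set $Z\subset X$ is called $r$-prox-regular ($r>0$) if for every $y\in X$ with $\mathrm{dist}(y,Z)=d\in(0,r)$ there exists $x\in Z$ such that $\mathrm{dist}\left(x+\frac{r}{d}(y-x),Z\right)=\frac{r}{d}|y-x|=r$. *)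

(* Defs.v *)
From HB Require Import structures.
From mathcomp Require Import all_boot all_order all_algebra.
From mathcomp Require Import all_classical all_reals all_analysis.
Set Implicit Arguments. Unset Strict Implicit. Unset Printing Implicit Defensive.
Import Order.TTheory GRing.Theory Num.Theory.
Import numFieldNormedType.Exports.
Local Open Scope classical_set_scope.
Local Open Scope ring_scope.

(* A real Hilbert space is modelled as a complete normed module V over a
   realType R together with a scalar product [ip] (symmetric, linear in the
   first argument) inducing the norm: <x,x> = |x|^2. *)
Definition is_scalar_product (R : realType) (V : normedModType R)
  (ip : V -> V -> R) : Prop :=
  (forall x y, ip x y = ip y x) /\
  (forall (a : R) (x y z : V), ip (a *: x + y) z = a * ip x z + ip y z) /\
  (forall x, ip x x = `|x| ^+ 2).

Definition dist (R : realType) (V : normedModType R) (x : V) (Z : set V) : R :=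
  inf [set `|x - z| | z in Z].

Definition cball (R : realType) (V : normedModType R) (x : V) (delta : R)
  : set V := [set y | `|y - x| <= delta].

Definition prox_regular (R : realType) (V : normedModType R) (r : R)
  (Z : set V) : Prop :=
  closed Z /\ connected Z /\
  forall y : V, 0 < dist y Z < r ->
    exists2 x, Z x &
      dist (x + (r / dist y Z) *: (y - x)) Z = (r / dist y Z) * `|y - x| /\
      (r / dist y Z) * `|y - x| = r.

(* Main.v *)
Require Import Defs.
From HB Require Import structures.
From mathcomp Require Import all_boot all_order all_algebra.
From mathcomp Require Import all_classical all_reals all_analysis.
From mathcomp Require Import ring lra.
Import Order.TTheory GRing.Theory Num.Theory.
Import numFieldNormedType.Exports.
Local Open Scope classical_set_scope.
Local Open Scope ring_scope.

Section Helpers.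
Variables (R : realType) (V : normedModType R) (ip : V -> V -> R).
Hypothesis Hip : is_scalar_product ip.

Lemma ip0l z : ip 0 z = 0.
Proof.
case: Hip => _ [lin _]; have := lin 1 0 0 z.
rewrite scale1r addr0 mul1r => h.
have : ip 0 z + ip 0 z - ip 0 z = ip 0 z - ip 0 z by rewrite -h.
by rewrite addrK subrr.
Qed.

Lemma ipZl (a : R) x z : ip (a *: x) z = a * ip x z.
Proof.
case: Hip => _ [lin _]; have := lin a x 0 z.
by rewrite addr0 ip0l addr0.
Qed.

Lemma ipDl x y z : ip (x + y) z = ip x z + ip y z.
Proof.
case: Hip => _ [lin _]; have := lin 1 x y z.
by rewrite scale1r mul1r.
Qed.

Lemma ipZr (a : R) x z : ip z (a *: x) = a * ip z x.
Proof. case: Hip => sym _; by rewrite sym ipZl sym. Qed.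

Lemma ipDr x y z : ip z (x + y) = ip z x + ip z y.
Proof. case: Hip => sym _; by rewrite sym ipDl sym (sym z y). Qed.

Lemma norm2_comb (a b : R) (p q : V) :
  `|a *: p + b *: q| ^+ 2 = a ^+ 2 * `|p| ^+ 2 + 2 * a * b * ip p q + b ^+ 2 * `|q| ^+ 2.
Proof.
case: Hip => sym [_ nrm].
rewrite -!nrm ipDl !ipZl !ipDr !ipZr (sym q p); ring.
Qed.

Lemma norm2_convex (a : R) (p q : V) :
  `|(1 - a) *: p + a *: q| ^+ 2 =
  (1 - a) * `|p| ^+ 2 + a * `|q| ^+ 2 - a * (1 - a) * `|p - q| ^+ 2.
Proof.
have -> : p - q = 1 *: p + (-1) *: q by rewrite scale1r scaleN1r.
rewrite !norm2_comb; ring.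
Qed.

End Helpers.

Lemma dirB (R : realType) (V : normedModType R) (r : R) (Z : set V) (hr : 0 < r) :
  (exists s d : R, 0 < s /\ 0 < d /\
     forall x, Z x -> exists2 xs, Z xs &
       `|x - xs| <= d /\
       forall alpha : R, 0 < alpha <= 1 ->
         [set x + alpha *: (xs - x) + alpha *: v | v in cball (0 : V) s]
           `<=` Z) ->
  (exists rho : R, 0 < rho < r / 5 /\
     forall x, Z x -> exists2 xb, Z xb &
       `|x - xb| ^+ 2 + rho ^+ 2 < 2 * r * rho /\ cball xb (3 * rho) `<=` Z).
Proof.
case=> s [d [s0 [d0 H]]].
set D := d ^+ 2 + s ^+ 2 + r * s.
have D0 : 0 < D by rewrite /D; nra.
set t := r * s / (3 * D).
have t0 : 0 < t by rewrite /t; apply: divr_gt0; nra.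
have tE : t * D = r * s / 3 by rewrite /t; field; lra.
have t1 : t <= 1 by rewrite -(ler_pM2r D0) mul1r tE /D; nra.
have tss : t * s < r / 3.
  have : t * s ^+ 2 < t * D by rewrite ltr_pM2l // /D; nra.
  rewrite tE => h; nra.
exists (t * s / 3); split; first by apply/andP; split; nra.
move=> x Zx; have [xs Zxs [hd hb]] := H x Zx.
have hbt := hb t (introT andP (conj t0 t1)).
exists (x + t *: (xs - x)).
  apply: hbt; exists 0; first by rewrite /cball /= subrr normr0 ltW.
  by rewrite scaler0 addr0.
split.
  rewrite opprD addrA subrr add0r normrN normrZ gtr0_norm // distrC.
  have m0 := normr_ge0 (xs - x).
  rewrite distrC in hd.
  set m := `|xs - x| in m0 hd *; have h1 : (t * m) ^+ 2 <= (t * d) ^+ 2 by rewrite lerXn2r // ?ler_pM2l // ?nnegrE; nra.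
  have h2 : t * (d ^+ 2 + s ^+ 2 / 9) < 2 * r * s / 3.
    have : t * (d ^+ 2 + s ^+ 2 / 9) <= t * D by rewrite ler_pM2l // /D; nra.
    rewrite tE; nra.
  have h3 : t * (t * (d ^+ 2 + s ^+ 2 / 9)) < t * (2 * r * s / 3) by rewrite ltr_pM2l.
  have -> : 2 * r * (t * s / 3) = t * (2 * r * s / 3) by ring.
  apply: (le_lt_trans _ h3).
  have -> : t * (t * (d ^+ 2 + s ^+ 2 / 9)) = (t * d) ^+ 2 + (t * s / 3) ^+ 2 by field.
  by rewrite lerD2r distrC.
move=> y hy; apply: hbt; exists (t^-1 *: (y - (x + t *: (xs - x)))).
  rewrite /cball /= subr0 normrZ normfV gtr0_norm //.
  rewrite /cball in hy.
  have e : 3 * (t * s / 3) = t * s by field.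
  by rewrite ler_pdivrMl // -e.
by rewrite scalerA mulfV ?gt_eqF // scale1r addrC subrK.
Qed.

Lemma dirA (R : realType) (V : normedModType R) (ip : V -> V -> R)
  (Hip : is_scalar_product ip)
  (r : R) (Z : set V) (hr : 0 < r) (HZ : prox_regular r Z) :
  (exists rho : R, 0 < rho < r / 5 /\
     forall x, Z x -> exists2 xb, Z xb &
       `|x - xb| ^+ 2 + rho ^+ 2 < 2 * r * rho /\ cball xb (3 * rho) `<=` Z) ->
  (exists s d : R, 0 < s /\ 0 < d /\
     forall x, Z x -> exists2 xs, Z xs &
       `|x - xs| <= d /\
       forall alpha : R, 0 < alpha <= 1 ->
         [set x + alpha *: (xs - x) + alpha *: v | v in cball (0 : V) s]
           `<=` Z).
Proof.
case: HZ => Zc [_ Hprox].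
case=> rho [/andP[rho0 rho5] H].
exists rho, r; split => //; split => //.
move=> x Zx; have [xb Zxb [ha hball]] := H x Zx.
set a := `|x - xb| in ha *.
have a0 : 0 <= a := normr_ge0 _.
have ar : a + rho < r.
  rewrite -ltrBrDr ltNge; apply/negP => h.
  have : (r - rho) ^+ 2 <= a ^+ 2.
    by rewrite lerXn2r // nnegrE; lra.
  have : 0 < r * (r - 5 * rho) by apply: mulr_gt0; lra.
  have : 0 < r * rho by apply: mulr_gt0.
  nra.
exists xb => //; split; first by rewrite -/a; lra.
move=> alpha /andP[al0 al1] _ [v hv <-].
rewrite /cball /= subr0 in hv.
set y := x + alpha *: (xb - x) + alpha *: v.
have [//|nZ] := pselect (Z y).
exfalso.
have [e e0 he] : exists2 e, 0 < e & forall z, Z z -> e <= `|y - z|.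
  have := closed_openC Zc; rewrite openE => /(_ y nZ).
  rewrite /interior => /nbhs_ballP [e /= e0 hb].
  exists e => // z Zz; rewrite leNgt; apply/negP => hlt.
  by apply: (hb z) => //; rewrite -ball_normE /ball_ /=.
have lbS : has_lbound [set `|y - z| | z in Z].
  by exists 0 => t [z _ <-]; exact: normr_ge0.
have yx : `|y - x| <= a + rho.
  have -> : y - x = alpha *: ((xb - x) + v).
    by rewrite /y [RHS]scalerDr addrAC [x + _ - x]addrAC subrr add0r.
  rewrite normrZ gtr0_norm //.
  have : `|xb - x + v| <= a + rho.
    by apply: (le_trans (ler_normD _ _)); rewrite distrC lerD2l.
  by move=> h; apply: (le_trans _ h); rewrite ler_piMl.
have dge : e <= dist y Z.
  apply: lb_le_inf; first by exists `|y - x|, x.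
  by move=> t [z Zz <-]; exact: he.
have dle : dist y Z <= `|y - x| by rewrite /dist; apply: (ge_inf lbS); exists x.
have [p Zp [hd hk]] : exists2 p, Z p &
   dist (p + (r / dist y Z) *: (y - p)) Z = (r / dist y Z) * `|y - p| /\ (r / dist y Z) * `|y - p| = r.
  by apply: Hprox; apply/andP; split; lra.
set dd := dist y Z in dge dle hd hk.
have dd0 : 0 < dd by lra.
have pm : `|y - p| = dd.
  have h1 : dd^-1 * `|y - p| = 1.
    by apply: (mulfI (lt0r_neq0 hr)); rewrite mulr1 mulrA hk.
  by rewrite -(mulVKf (lt0r_neq0 dd0) (`|y - p|)) h1 mulr1.
set c := p + (r / dd) *: (y - p) in hd.
have hc : forall z, Z z -> r <= `|c - z|.
  move=> z Zz; rewrite -hk -hd; apply: ge_inf.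
    by exists 0 => t [w _ <-]; exact: normr_ge0.
  by exists z.
have yc : `|y - c| < r.
  have -> : y - c = (1 - r / dd) *: (y - p).
    by rewrite /c opprD addrA scalerBl scale1r.
  rewrite normrZ pm.
  have -> : `|1 - r / dd| * dd = `|(1 - r / dd) * dd| by rewrite normrM (gtr0_norm dd0).
  have -> : (1 - r / dd) * dd = - (r - dd).
    by rewrite mulrBl mul1r mulfVK ?(lt0r_neq0 dd0) // opprB.
  rewrite normrN gtr0_norm; lra.
set u := xb + v.
have uxb : u - xb = v by rewrite /u addrAC subrr add0r.
have Zu : Z u by apply: hball; rewrite /cball /= uxb; lra.
set Q := `|u - c|.
have Qr : r <= Q by rewrite /Q distrC; apply: hc.
have hQ : r + 2 * rho <= Q.
  rewrite leNgt; apply/negP => hlt.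
  have Q0 : 0 < Q by lra.
  set t := 2 * rho / Q.
  have tQ : t * Q = 2 * rho by rewrite /t mulfVK ?(lt0r_neq0 Q0).
  have t0 : 0 <= t by rewrite /t divr_ge0 //; lra.
  set z := u + t *: (c - u).
  have Zz : Z z.
    apply: hball; rewrite /cball /= /z addrAC uxb.
    apply: (le_trans (ler_normD _ _)).
    rewrite normrZ (ger0_norm t0) distrC -/Q tQ; lra.
  have := hc z Zz.
  have -> : c - z = (1 - t) *: (c - u).
    by rewrite /z opprD addrA scalerBl scale1r.
  have t1 : 0 <= 1 - t.
    rewrite subr_ge0 /t ler_pdivrMr // mul1r; lra.
  rewrite normrZ (ger0_norm t1) distrC -/Q mulrBl mul1r tQ; lra.
have hP : r <= `|x - c| by rewrite distrC; apply: hc.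
have hD : `|(x - c) - (u - c)| <= a + rho.
  rewrite opprB addrA subrK /u opprD addrA.
  by apply: (le_trans (ler_normB _ _)); rewrite lerD2l.
have ycE : y - c = (1 - alpha) *: (x - c) + alpha *: (u - c).
  have -> : y - c = (x - c) + alpha *: ((u - c) - (x - c)).
    rewrite opprB addrA subrK /u [xb + v - x]addrAC scalerDr.
    by rewrite /y -[x + _ + _]addrA addrAC.
  by rewrite scalerBl scale1r scalerBr addrA [RHS]addrAC.
have Y2 := @norm2_convex _ _ _ Hip alpha (x - c) (u - c).
rewrite -ycE -/Q in Y2.
set Y := `|y - c| in yc Y2.
set P := `|x - c| in hP Y2.
set D := `|_ - _| in hD Y2.
have Y0 : 0 <= Y := normr_ge0 _.
have D0 : 0 <= D := normr_ge0 _.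
have h1 : (1 - alpha) * r ^+ 2 <= (1 - alpha) * P ^+ 2.
  by apply: ler_wpM2l; [lra | rewrite lerXn2r // nnegrE; lra].
have h2 : alpha * (r + 2 * rho) ^+ 2 <= alpha * Q ^+ 2.
  by apply: ler_wpM2l; [lra | rewrite lerXn2r // nnegrE; lra].
have h3 : alpha * (1 - alpha) * D ^+ 2 <= alpha * (a + rho) ^+ 2.
  have : D ^+ 2 <= (a + rho) ^+ 2 by rewrite lerXn2r // nnegrE; lra.
  have : 0 <= alpha * (1 - alpha) by rewrite mulr_ge0 ?subr_ge0 // ltW.
  nra.
have h4 : (a + rho) ^+ 2 < 4 * r * rho by nra.
have h5 : 0 < alpha * (4 * r * rho + 4 * rho ^+ 2 - (a + rho) ^+ 2).
  by apply: mulr_gt0 => //; nra.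
have : Y ^+ 2 < r ^+ 2 by rewrite ltrXn2r // nnegrE; lra.
nra.
Qed.

Theorem lemma1p6 (R : realType) (V : completeNormedModType R)
  (ip : V -> V -> R) (Hip : is_scalar_product ip)
  (r : R) (Z : set V) (hr : 0 < r) (HZ : prox_regular r Z) :
  (exists rho : R, 0 < rho < r / 5 /\
     forall x, Z x -> exists2 xb, Z xb &
       `|x - xb| ^+ 2 + rho ^+ 2 < 2 * r * rho /\ cball xb (3 * rho) `<=` Z)
  <->
  (exists s d : R, 0 < s /\ 0 < d /\
     forall x, Z x -> exists2 xs, Z xs &
       `|x - xs| <= d /\
       forall alpha : R, 0 < alpha <= 1 ->
         [set x + alpha *: (xs - x) + alpha *: v | v in cball (0 : V) s]
           `<=` Z).
Proof.
split; [exact: (@dirA R V ip Hip r Z hr HZ) | exact: (@dirB R V r Z hr)].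
Qed.
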